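(* Let $R$ be a ring, $N$ an exact complex of left $R$-modules and $M$ a bounded below complex of left $R$-modules. If $Z_n(N)\in\underline{\mathfrak{Pr}}^{-1}_{R\text{-Mod}}(M_n)$ for every $n\in\mathbb{Z}$, then $N\in\underline{\mathfrak{Pr}}^{-1}_{\mathscr{C}(R)}(M)$.
   Context: Complexes are homologically indexed, $Z_n(N)=\mathrm{Ker}\,d_n^N$. A complex $M$ is bounded below if there is $b$ with $M_n=0$ for all $n\le b$. For objects $M,N$ of an abelian category $\mathscr{A}$ with enough projectives ($R\text{-Mod}$ or the category $\mathscr{C}(R)$ of complexes), $M$ is $N$-subprojective if every morphism $M\to N$ factors through a projective object of $\mathscr{A}$; $\underline{\mathfrak{Pr}}^{-1}_{\mathscr{A}}(M)$ is the class of all $N$ such that $M$ is $N$-subprojective. *)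

(* Defs.v *)
From HB Require Import structures.
From mathcomp Require Import all_boot all_order all_algebra.
Set Implicit Arguments. Unset Strict Implicit. Unset Printing Implicit Defensive.
Import GRing.Theory Num.Theory.
Local Open Scope ring_scope.

Section Defs.
Variable R : pzRingType.

Definition is_lin (M N : lmodType R) (f : M -> N) : Prop :=
  forall (a : R) (x y : M), f (a *: x + y) = a *: f x + f y.

Definition projective_mod (P : lmodType R) : Prop :=
  forall (X Y : lmodType R) (p : X -> Y) (f : P -> Y),
    is_lin p -> (forall y, exists x, p x = y) -> is_lin f ->
    exists g : P -> X, is_lin g /\ forall z, p (g z) = f z.

Definition subprojective_mod (M N : lmodType R) : Prop :=
  forall f : M -> N, is_lin f ->
    exists (P : lmodType R) (g : M -> P) (h : P -> N),
      [/\ projective_mod P, is_lin g, is_lin h & forall x, f x = h (g x)].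

(* Complexes of left R-modules, homologically indexed by int:
   dif n : obj (n+1) -> obj n  is the differential d_{n+1}. *)
Unset Implicit Arguments.
Record complex := Complex {
  obj : int -> lmodType R;
  dif : forall n : int, obj (n + 1) -> obj n;
  dif_lin : forall n, is_lin (dif n);
  dif_dif : forall n (x : obj (n + 1 + 1)), dif n (dif (n + 1) x) = 0
}.

Set Implicit Arguments.

Definition is_chain (M N : complex) (f : forall n, obj M n -> obj N n) : Prop :=
  (forall n, is_lin (f n)) /\
  (forall n (x : obj M (n + 1)), dif N n (f (n + 1) x) = f n (dif M n x)).

Definition projective_cx (P : complex) : Prop :=
  forall (X Y : complex) (p : forall n, obj X n -> obj Y n)
         (f : forall n, obj P n -> obj Y n),
    is_chain p -> (forall n (y : obj Y n), exists x, p n x = y) -> is_chain f ->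
    exists g : forall n, obj P n -> obj X n,
      is_chain g /\ forall n z, p n (g n z) = f n z.

Definition subprojective_cx (M N : complex) : Prop :=
  forall f : forall n, obj M n -> obj N n, is_chain f ->
    exists (P : complex) (g : forall n, obj M n -> obj P n)
           (h : forall n, obj P n -> obj N n),
      [/\ projective_cx P, is_chain g, is_chain h & forall n x, f n x = h n (g n x)].

Definition exact_cx (N : complex) : Prop :=
  forall n (y : obj N (n + 1)), dif N n y = 0 ->
    exists x : obj N (n + 1 + 1), dif N (n + 1) x = y.

Definition bounded_below (M : complex) : Prop :=
  exists b : int, forall n : int, n <= b -> forall x : obj M n, x = 0.

(* "Z_{n+1}(N) in Pr^{-1}(M_{n+1})", i.e. M_{n+1} is Z_{n+1}(N)-subprojective,
   where Z_{n+1}(N) = Ker (dif N n) <= N_{n+1}. A linear map into the submodule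
   Z_{n+1}(N) is written out as a linear map into N_{n+1} landing in the kernel. *)
Definition cycles_subprojective (M N : complex) (n : int) : Prop :=
  forall f : obj M (n + 1) -> obj N (n + 1),
    is_lin f -> (forall x, dif N n (f x) = 0) ->
    exists (P : lmodType R) (g : obj M (n + 1) -> P) (h : P -> obj N (n + 1)),
      [/\ projective_mod P, is_lin g, is_lin h,
          (forall z, dif N n (h z) = 0) & forall x, f x = h (g x)].

End Defs.

(* Main.v *)
Require Import Defs.
From HB Require Import structures.
From mathcomp Require Import all_boot all_order all_algebra.
Import GRing.Theory Num.Theory.
Local Open Scope ring_scope.

Section Lin.
Variable R : pzRingType.
Lemma lin0 (A B : lmodType R) (f : A -> B) : is_lin f -> f 0 = 0.
Proof. move=> h; have := h 1 0 0; rewrite !scale1r addr0 => e.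
by apply: (addrI (f 0)); rewrite addr0 -e. Qed.
Lemma linD (A B : lmodType R) (f : A -> B) : is_lin f -> forall x y, f (x + y) = f x + f y.
Proof. by move=> h x y; rewrite -[x]scale1r h !scale1r. Qed.
Lemma linZ (A B : lmodType R) (f : A -> B) : is_lin f -> forall a x, f (a *: x) = a *: f x.
Proof. by move=> h a x; rewrite -[a *: x]addr0 h lin0 // addr0. Qed.
Lemma linN (A B : lmodType R) (f : A -> B) : is_lin f -> forall x, f (- x) = - f x.
Proof. by move=> h x; rewrite -scaleN1r linZ // scaleN1r. Qed.
Lemma linB (A B : lmodType R) (f : A -> B) : is_lin f -> forall x y, f (x - y) = f x - f y.
Proof. by move=> h x y; rewrite linD // linN. Qed.
End Lin.
Arguments lin0 {R A B f}.
Arguments linD {R A B f}.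
Arguments linZ {R A B f}.
Arguments linN {R A B f}.
Arguments linB {R A B f}.

Section Ker.
Variables (R : pzRingType) (A B : lmodType R) (d : A -> B) (dl : is_lin d).
Definition KerT := {x : A | d x == 0}.
HB.instance Definition _ := Choice.on KerT.
Lemma k0 : d 0 == 0. Proof. by rewrite lin0. Qed.
Lemma kadd (x y : KerT) : d (val x + val y) == 0.
Proof. by rewrite linD // (eqP (valP x)) (eqP (valP y)) addr0. Qed.
Lemma kopp (x : KerT) : d (- val x) == 0.
Proof. by rewrite linN // (eqP (valP x)) oppr0. Qed.
Lemma kscale a (x : KerT) : d (a *: val x) == 0.
Proof. by rewrite linZ // (eqP (valP x)) scaler0. Qed.
Definition kzero : KerT := exist (fun v => d v == 0) 0 k0.
Definition kaddf (x y : KerT) : KerT := exist (fun v => d v == 0) _ (kadd x y).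
Definition koppf (x : KerT) : KerT := exist (fun v => d v == 0) _ (kopp x).
Definition kscalef a (x : KerT) : KerT := exist (fun v => d v == 0) _ (kscale a x).
Lemma kaddA : associative kaddf.
Proof. by move=> x y z; apply: val_inj; rewrite /= addrA. Qed.
Lemma kaddC : commutative kaddf.
Proof. by move=> x y; apply: val_inj; rewrite /= addrC. Qed.
Lemma kadd0 : left_id kzero kaddf.
Proof. by move=> x; apply: val_inj; rewrite /= add0r. Qed.
Lemma kaddN : left_inverse kzero koppf kaddf.
Proof. by move=> x; apply: val_inj; rewrite /= addNr. Qed.
HB.instance Definition _ := GRing.isZmodule.Build KerT kaddA kaddC kadd0 kaddN.
Lemma kscA a b (x : KerT) : kscalef a (kscalef b x) = kscalef (a * b) x.
Proof. by apply: val_inj; rewrite /= scalerA. Qed.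
Lemma ksc1 : left_id 1 kscalef.
Proof. by move=> x; apply: val_inj; rewrite /= scale1r. Qed.
Lemma kscDr : right_distributive kscalef +%R.
Proof. by move=> a x y; apply: val_inj; rewrite /= scalerDr. Qed.
Lemma kscDl (x : KerT) : {morph kscalef^~ x : a b / a + b}.
Proof. by move=> a b; apply: val_inj; rewrite /= scalerDl. Qed.
HB.instance Definition _ := GRing.Zmodule_isLmodule.Build R KerT kscA ksc1 kscDr kscDl.
Definition KerM : lmodType R := KerT.
End Ker.
Lemma kvalD (R : pzRingType) (A B : lmodType R) (d : A -> B) (dl : is_lin d) (x y : @KerM R A B d dl) : val (x + y) = val x + val y.
Proof. by []. Qed.
Lemma kvalZ (R : pzRingType) (A B : lmodType R) (d : A -> B) (dl : is_lin d) a (x : @KerM R A B d dl) : val (a *: x) = a *: val x.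
Proof. by []. Qed.
Lemma pairD (R : pzRingType) (A B : lmodType R) (x1 x2 : A) (y1 y2 : B) : ((x1, y1) + (x2, y2) : (A * B)%type) = (x1 + x2, y1 + y2).
Proof. by []. Qed.
Lemma pairZ (R : pzRingType) (A B : lmodType R) a (x1 : A) (y1 : B) : (a *: (x1, y1) : (A * B)%type) = (a *: x1, a *: y1).
Proof. by []. Qed.
Lemma pair0 (R : pzRingType) (A B : lmodType R) : (0 : (A * B)%type) = (0, 0).
Proof. by []. Qed.
From Stdlib Require Import ClassicalEpsilon.
From mathcomp Require Import zify.
Import Order.TTheory.
Arguments obj {R} c _.
Arguments dif {R} c n _.
Arguments dif_lin {R} c n a x y.
Arguments dif_dif {R} c n x.

Lemma eA (n : int) : n + 1 - 1 = n. Proof. by rewrite addrK. Qed.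
Lemma eB (n : int) : n - 1 + 1 = n. Proof. by rewrite subrK. Qed.

Lemma castK (F : int -> Type) i j (e : i = j) (x : F i) :
  eq_rect j F (eq_rect i F x j e) i (esym e) = x.
Proof. by subst j. Qed.
Lemma castK' (F : int -> Type) i j (e : i = j) (x : F j) :
  eq_rect i F (eq_rect j F x i (esym e)) j e = x.
Proof. by subst j. Qed.
Lemma cast_lin (R : pzRingType) (F : int -> lmodType R) i j (e : i = j) :
  is_lin (fun x : F i => eq_rect i (fun k => F k : Type) x j e).
Proof. by subst j. Qed.

Lemma shift (F : int -> Type) (P : forall k, F k -> Prop) :
  (forall m x, P (m + 1) x) -> forall k x, P k x.
Proof. move=> H k; rewrite -(eB k); exact: H. Qed.

Set Implicit Arguments.
Section Main.
Variables (R : pzRingType) (N M : complex R).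
Hypothesis exN : exact_cx N.
Hypothesis Hc : forall n, cycles_subprojective M N n.
Variable b : int.
Hypothesis hb : forall n : int, n <= b -> forall x : obj M n, x = 0.
Variable f : forall n, obj M n -> obj N n.
Hypothesis fc : is_chain f.

Record Stage (k : int) : Type := MkStage {
  Pm : lmodType R; gq : obj M k -> Pm; hq : Pm -> obj N (k + 1);
  Pproj : projective_mod Pm; gqL : is_lin gq; hqL : is_lin hq }.

Definition sS k (st : Stage k) x := hq st (gq st x).
Definition Wp k (st : Stage k) := forall x : obj M (k + 1),
  f k (dif M k x) = dif N k (sS st (dif M k x)).
Definition Fp k (st : Stage k) (st' : Stage (k + 1)) := forall x : obj M (k + 1),
  f (k + 1) x = dif N (k + 1) (sS st' x) + sS st (dif M k x).

Lemma sS_lin k (st : Stage k) : is_lin (sS st).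
Proof. by move=> a x y; rewrite /sS (gqL st) (hqL st). Qed.

Lemma step_ex k (st : Stage k) : Wp st -> exists st' : Stage (k + 1), Wp st' /\ Fp st st'.
Proof.
move=> W.
pose phi x := f (k + 1) x - sS st (dif M k x).
have phiL : is_lin phi.
  move=> a x y; rewrite /phi (fc.1 (k + 1)) (dif_lin M k) (sS_lin st) scalerBr.
  by rewrite opprD addrACA.
have phiZ : forall x, dif N k (phi x) = 0.
  move=> x; rewrite /phi linB; last exact: dif_lin. idtac.
  by rewrite fc.2 W subrr.
have [P [g [h [Pp gL hL hZ fact]]]] := Hc k phiL phiZ.
pose Z := @KerM R _ _ (dif N k) (dif_lin N k).
pose p : obj N (k + 1 + 1) -> Z :=
  fun a => exist (fun v => dif N k v == 0) (dif N (k + 1) a) (introT eqP (dif_dif N k a)).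
pose f0 : P -> Z := fun z => exist (fun v => dif N k v == 0) (h z) (introT eqP (hZ z)).
have pL : is_lin p.
  by move=> a x y; apply: val_inj; rewrite kvalD kvalZ /= (dif_lin N (k + 1)).
have f0L : is_lin f0.
  by move=> a x y; apply: val_inj; rewrite kvalD kvalZ /= hL.
have psurj : forall y : Z, exists x, p x = y.
  move=> y; have [x hx] := exN k (val y) (eqP (valP y)).
  by exists x; apply: val_inj; rewrite /= hx.
have [l [lL hl]] := Pp _ _ p f0 pL psurj f0L.
have hl' : forall z, dif N (k + 1) (l z) = h z.
  by move=> z; have := congr1 val (hl z).
have FF : Fp st (@MkStage (k + 1) P g l Pp gL lL).
  by move=> x; rewrite /sS /= hl' -fact /phi subrK.
exists (@MkStage (k + 1) P g l Pp gL lL); split => // x.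
rewrite (FF (dif M (k + 1) x)) dif_dif lin0 ?addr0 //; exact: sS_lin.
Qed.

Definition StW k := {st : Stage k | Wp st}.
Definition step k (s : StW k) : StW (k + 1) :=
  let e := constructive_indefinite_description _ (step_ex (svalP s)) in
  exist _ (sval e) (proj1 (svalP e)).
Lemma stepF k (s : StW k) : Fp (sval s) (sval (step s)).
Proof.
by rewrite /step; case: constructive_indefinite_description => st' [].
Qed.

Lemma P0ex : exists P : lmodType R, projective_mod P.
Proof.
have zL : is_lin (fun _ : obj M (b + 1) => (0 : obj N (b + 1))).
  by move=> a x y; rewrite scaler0 addr0.
have [P [g [h [Pp _ _ _ _]]]] := Hc b zL (fun x => lin0 (dif_lin N b)).
by exists P.
Qed.
Definition P0 := sval (constructive_indefinite_description _ P0ex).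
Lemma P0p : projective_mod P0.
Proof. exact: svalP. Qed.

Lemma zlin (A B : lmodType R) : is_lin (fun _ : A => (0 : B)).
Proof. by move=> a x y; rewrite scaler0 addr0. Qed.

Definition zst k : Stage k := @MkStage k P0 (fun _ => 0) (fun _ => 0) P0p (zlin _ _) (zlin _ _).

Lemma Wz : Wp (zst b).
Proof.
move=> x; rewrite (hb b (lexx b) (dif M b x)) (lin0 (fc.1 b)).
by rewrite /sS /= (lin0 (dif_lin N b)).
Qed.

Fixpoint rec (m : nat) : {k : int & StW k} :=
  match m with
  | 0 => existT _ b (exist _ (zst b) Wz)
  | m'.+1 => existT _ (projT1 (rec m') + 1) (step (projT2 (rec m')))
  end.

Lemma rec1 m : projT1 (rec m) = b + m%:Z.
Proof. elim: m => [|m IH] /=; first by rewrite addr0. by rewrite IH; lia. Qed.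

Definition stk (k : int) : Stage k :=
  match eq_comparable (projT1 (rec (absz (k - b)))) k with
  | left e => eq_rect _ Stage (sval (projT2 (rec (absz (k - b))))) k e
  | right _ => zst k
  end.

Lemma stk_eq n k (e : projT1 (rec n) = k) : n = absz (k - b) ->
  stk k = eq_rect _ Stage (sval (projT2 (rec n))) k e.
Proof.
move=> En; subst n; rewrite /stk; case: eq_comparable => [e'|/(_ e) //].
by rewrite (eq_irrelevance e e').
Qed.

Lemma Fgen i (s : StW i) k (e : i = k) (e' : i + 1 = k + 1) :
  Fp (eq_rect _ Stage (sval s) k e) (eq_rect _ Stage (sval (step s)) (k + 1) e').
Proof. subst k; rewrite (eq_irrelevance e' erefl) /=; exact: stepF. Qed.

Lemma stkF k : Fp (stk k) (stk (k + 1)).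
Proof.
have [hk|hk] := leP b k.
  set m := absz (k - b).
  have e : projT1 (rec m) = k by rewrite rec1 /m; lia.
  have e' : projT1 (rec m.+1) = k + 1 by rewrite rec1 /m; lia.
  rewrite (stk_eq e erefl) (stk_eq e'); last by rewrite /m; lia.
  exact: (Fgen (projT2 (rec m)) e e').
move=> x; have x0 : x = 0 by apply: hb; lia.
rewrite x0 (lin0 (fc.1 (k + 1))) (lin0 (sS_lin _)) (lin0 (dif_lin M k)).
by rewrite (lin0 (dif_lin N (k + 1))) (lin0 (sS_lin _)) addr0.
Qed.

Definition Pm' k : lmodType R := Pm (stk k).
Definition gq' k : obj M k -> Pm' k := gq (stk k).
Definition hq' k : Pm' k -> obj N (k + 1) := hq (stk k).
Lemma gq'L k : is_lin (gq' k). Proof. exact: gqL. Qed.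
Lemma hq'L k : is_lin (hq' k). Proof. exact: hqL. Qed.

Definition PF := fun k => (Pm' k : Type).
Definition MF := fun k => (obj M k : Type).
Definition NF := fun k => (obj N k : Type).

Definition io n (x : Pm' (n + 1 - 1)) : Pm' n := eq_rect _ PF x n (eA n).
Definition ko n (x : Pm' n) : Pm' (n + 1 - 1) := eq_rect _ PF x _ (esym (eA n)).
Lemma ioL n : is_lin (io n). Proof. exact: (@cast_lin R Pm' _ _ (eA n)). Qed.
Lemma koL n : is_lin (ko n). Proof. exact: (@cast_lin R Pm' _ _ (esym (eA n))). Qed.
Lemma ioK n x : io n (ko n x) = x. Proof. exact: castK'. Qed.
Lemma koK n x : ko n (io n x) = x. Proof. exact: castK. Qed.

Definition g' j (x : obj M j) : Pm' (j - 1) :=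
  gq' (j - 1) (dif M (j - 1) (eq_rect _ MF x _ (esym (eB j)))).
Definition h' j (y : Pm' (j - 1)) : obj N j :=
  eq_rect _ NF (hq' (j - 1) y) j (eB j).
Lemma g'L j : is_lin (g' j).
Proof.
move=> a x y; rewrite /g' (@cast_lin R (obj M) _ _ (esym (eB j))) (dif_lin M) (gq'L (j - 1)) //.
Qed.
Lemma h'L j : is_lin (h' j).
Proof. by move=> a x y; rewrite /h' (hq'L (j - 1)) (@cast_lin R (obj N) _ _ (eB j)). Qed.

Lemma G1gen i n (e : i = n) (e2 : n + 1 = i + 1) (x : obj M (n + 1)) :
  eq_rect i PF (gq' i (dif M i (eq_rect (n + 1) MF x (i + 1) e2))) n e
  = gq' n (dif M n x).
Proof. subst n; by rewrite (eq_irrelevance e2 erefl). Qed.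
Lemma G1 n x : io n (g' (n + 1) x) = gq' n (dif M n x).
Proof. exact: G1gen. Qed.
Lemma H1gen i n (e : i = n) (e2 : i + 1 = n + 1) (y : Pm' i) :
  eq_rect (i + 1) NF (hq' i y) (n + 1) e2 = hq' n (eq_rect i PF y n e).
Proof. subst n; by rewrite (eq_irrelevance e2 erefl). Qed.
Lemma H1 n y : h' (n + 1) y = hq' n (io n y).
Proof. exact: H1gen. Qed.
Lemma G2 k (y : obj M (k + 1)) : g' k (dif M k y) = 0.
Proof.
move: k y; apply: (@shift (fun k => obj M (k + 1))) => m y.
rewrite -[LHS]koK G1 dif_dif (lin0 (gq'L m)).
exact: (lin0 (koL m)).
Qed.

Definition TO j : lmodType R := (Pm' j * Pm' (j - 1))%type.
Definition TD n (p : TO (n + 1)) : TO n := (io n p.2, 0).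
Lemma TDL n : is_lin (TD n).
Proof.
move=> a [x1 x2] [y1 y2]; rewrite /TD pairZ pairD /= pairZ pairD ioL.
by rewrite scaler0 addr0.
Qed.
Lemma TDD n (x : TO (n + 1 + 1)) : TD n (TD (n + 1) x) = 0.
Proof. by rewrite /TD /= (lin0 (ioL n)). Qed.
Definition T : complex R := @Complex R TO TD TDL TDD.

Definition gT j (x : obj M j) : obj T j := (gq' j x, g' j x).
Definition hT j (p : obj T j) : obj N j := dif N j (hq' j p.1) + h' j p.2.

Lemma gT_chain : is_chain gT.
Proof.
split.
  by move=> n a x y; rewrite /gT /= pairZ pairD gq'L g'L.
move=> n x; rewrite /gT /= /TD /= G1 G2 //.
Qed.

Lemma hT_chain : is_chain hT.
Proof.
split.
  move=> n a [x1 x2] [y1 y2]; rewrite /hT pairZ pairD /= hq'L (dif_lin N) h'L.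
  by rewrite scalerDr addrACA.
move=> n [x1 x2]; rewrite /hT /= (linD (dif_lin N n)) dif_dif add0r.
by rewrite (lin0 (h'L n)) addr0 H1.
Qed.

Lemma fact_hg j x : f j x = hT (gT j x).
Proof.
move: j x; apply: shift => m x.
rewrite /hT /gT /= H1 G1 (stkF m x).
by [].
Qed.

Lemma T_proj : projective_cx T.
Proof.
move=> X Y p fY pc psurj fc'.
have ex : forall j, exists v : Pm' (j - 1) -> obj X j,
    is_lin v /\ forall z, p j (v z) = fY j (0, z).
  move=> j.
  have uL : is_lin (fun z : Pm' (j - 1) => fY j ((0, z) : obj T j)).
    move=> a x y; rewrite -(fc'.1 j) pairZ pairD scaler0 addr0 //.
  exact: (Pproj (stk (j - 1)) (pc.1 j) (psurj j) uL).
pose v j := sval (constructive_indefinite_description _ (ex j)).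
have vL : forall j, is_lin (v j).
  by move=> j; rewrite /v; case: constructive_indefinite_description => ? [].
have vp : forall j z, p j (v j z) = fY j (0, z).
  by move=> j; rewrite /v; case: constructive_indefinite_description => ? [].
pose gam j (q : obj T j) : obj X j := dif X j (v (j + 1) (ko j q.1)) + v j q.2.
exists gam; split.
- split.
    move=> n a [x1 x2] [y1 y2]; rewrite /gam pairZ pairD /= koL vL (dif_lin X) vL.
    by rewrite scalerDr addrACA.
  move=> n [x1 x2]; rewrite /gam /= (linD (dif_lin X n)) dif_dif add0r.
  by rewrite /TD /= koK (lin0 (vL n)) addr0.
- move=> n [x1 x2]; rewrite /gam /= (linD (pc.1 n)) -(pc.2 n) !vp (fc'.2 n).
  rewrite /= /TD /= ioK -(linD (fc'.1 n)) pairD addr0 add0r //.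
Qed.

End Main.
Unset Implicit Arguments.

Theorem theorem2p6 (R : pzRingType) (N M : complex R) :
  exact_cx N -> bounded_below M ->
  (forall n : int, cycles_subprojective M N n) ->
  subprojective_cx M N.
Proof.
move=> exN [b hb] Hc f fc.
exists (@T _ _ _ exN Hc b hb f fc), (@gT _ _ _ exN Hc b hb f fc), (@hT _ _ _ exN Hc b hb f fc).
split; [exact: T_proj | exact: gT_chain | exact: hT_chain | exact: fact_hg].
Qed.
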